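(* Let $G$ be a loopy graph. Then there exist infinitely many numerical semigroups $S$ such that the graph $G(S)$ is isomorphic to $G$.
   Context: A loopy graph is a finite graph with no isolated vertices and no multiple edges, but possibly with loops. A numerical semigroup is a subset $S\subseteq\mathbb N$ containing $0$, closed under addition, with finite complement; $m=\min(S\setminus\{0\})$ is its multiplicity. Let $X=\{s\in S\setminus\{0\}: s-m\notin S\}$ (nonzero Apéry elements). The graph $G(S)$ has edge set consisting of all subsets $\{x,y\}\subseteq X$ (with $x=y$ allowed, giving a loop) such that $x+y\in X$, and vertex set the set of all endvertices of these edges. *)

(* Defs.v *)
From mathcomp Require Import all_boot.
Set Implicit Arguments. Unset Strict Implicit. Unset Printing Implicit Defensive.

(* A loopy graph: finite vertex type T, symmetric edge relation e
   (loops allowed: e x x), no multiple edges (automatic for a relation),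
   no isolated vertices. *)
Definition loopy_graph (T : finType) (e : rel T) : Prop :=
  symmetric e /\ (forall x : T, exists y : T, e x y).

Definition numerical_semigroup (S : nat -> bool) : Prop :=
  [/\ S 0,
      (forall a b, S a -> S b -> S (a + b)) &
      (exists N, forall n, N <= n -> S n)].

Definition is_multiplicity (S : nat -> bool) (m : nat) : Prop :=
  [/\ S m, 0 < m & forall s, S s -> 0 < s -> m <= s].

(* Nonzero Apery elements X = { s in S \ {0} : s - m notin S }, where s - m
   is the integer difference (so if s < m it is negative, hence not in S). *)
Definition apery_nz (S : nat -> bool) (x : nat) : Prop :=
  exists m, is_multiplicity S m /\
    [/\ S x, 0 < x & ~~ ((m <= x) && S (x - m))].

Definition GS_edge (S : nat -> bool) (x y : nat) : Prop :=
  [/\ apery_nz S x, apery_nz S y & apery_nz S (x + y)].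

Definition GS_vertex (S : nat -> bool) (v : nat) : Prop :=
  exists w, GS_edge S v w.

Definition iso_to_GS (T : finType) (e : rel T) (S : nat -> bool) : Prop :=
  exists f : T -> nat,
    [/\ injective f,
        (forall v, GS_vertex S v <-> exists x, f x = v) &
        (forall x y, e x y <-> GS_edge S (f x) (f y))].

(* Main.v *)
Require Import Defs.
From mathcomp Require Import all_boot.
From mathcomp Require Import zify.
Set Implicit Arguments. Unset Strict Implicit.

Lemma four_pow a : 4 ^ a = 2 ^ (2 * a).
Proof. by rewrite expnM. Qed.

Lemma logn_sum a b : a <= b -> logn 2 (4 ^ a + 4 ^ b) = 2 * a + (a == b).
Proof.
move=> ab; case: eqP => [<-|/eqP nab].
  rewrite four_pow addnn -mul2n -expnS pfactorK //; lia.
have ltab : a < b by rewrite ltn_neqAle nab.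
have -> : 4 ^ a + 4 ^ b = (1 + 4 ^ (b - a)) * 2 ^ (2 * a).
  by rewrite mulnDl mul1n -four_pow -expnD subnK // ltnW.
rewrite logn_Gauss ?pfactorK // ?addn0 // coprime2n.
have : 0 < b - a by rewrite subn_gt0.
case: (b - a) => // k _; by rewrite expnS oddD oddM.
Qed.

Lemma sidon_ord a b c d : a <= b -> c <= d ->
  4 ^ a + 4 ^ b = 4 ^ c + 4 ^ d -> a = c /\ b = d.
Proof.
move=> ab cd E.
have := logn_sum ab; rewrite E logn_sum // => H.
have ac : a = c by move: H; case: (a == b); case: (c == d); lia.
subst c; split=> //.
move/addnI: E => /eqP; rewrite eqn_exp2l // => /eqP //.
Qed.

Lemma sidon a b c d : 4 ^ a + 4 ^ b = 4 ^ c + 4 ^ d ->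
  (a = c /\ b = d) \/ (a = d /\ b = c).
Proof.
case: (leqP a b) => ab; case: (leqP c d) => cd E.
- by left; apply: sidon_ord.
- have [] := sidon_ord ab (ltnW cd) (etrans E (addnC _ _)); by right.
- have [] := sidon_ord (ltnW ab) cd (etrans (addnC _ _) E); by right.
- have [] := sidon_ord (ltnW ab) (ltnW cd) (etrans (addnC _ _) (etrans E (addnC _ _))); by left.
Qed.

Section Constr.
Variables (T : finType) (e : rel T) (i : nat).
Hypothesis esym : symmetric e.

Definition eps (u : T) := 4 ^ (enum_rank u).
Definition NN := 2 * 4 ^ #|T| + i.+1.
Definition cc (u : T) := NN + eps u.
Definition mm := 3 * NN.
Definition inA (s : nat) :=
  [exists u, s == mm + cc u] ||
  [exists u, exists v, ~~ e u v && (s == mm + cc u + cc v)].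
Definition Ssg (s : nat) : bool := [|| s == 0, s == mm, inA s | 2 * mm <= s].

Lemma eps_lt u : eps u < 4 ^ #|T|.
Proof. by rewrite /eps ltn_exp2l. Qed.

Lemma inA_range s : inA s -> mm + NN <= s < 2 * mm.
Proof.
case/orP => [/existsP [u /eqP ->]|/existsP [u /existsP [v /andP [_ /eqP ->]]]];
 have := eps_lt u; try have := eps_lt v; rewrite /cc /mm /NN; lia.
Qed.

Lemma S_ge s : Ssg s -> s = 0 \/ mm <= s.
Proof.
case/or4P => [/eqP|/eqP|/inA_range|]; try lia.
Qed.

Lemma mm_pos : 0 < mm.
Proof. rewrite /mm /NN; lia. Qed.

Lemma S_add a b : Ssg a -> Ssg b -> Ssg (a + b).
Proof.
move=> Sa Sb; case: (S_ge Sa) => [->|ha] //; case: (S_ge Sb) => [->|hb].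
  by rewrite addn0.
apply/or4P; apply: Or44; lia.
Qed.

Lemma numsg : numerical_semigroup Ssg.
Proof.
split => //; first exact: S_add.
exists (2 * mm) => n h; apply/or4P; apply: Or44; exact h.
Qed.

Lemma mult_mm : is_multiplicity Ssg mm.
Proof.
split; [by rewrite /Ssg eqxx orbT | exact: mm_pos |].
by move=> s /S_ge [->|].
Qed.

Lemma mult_uniq m : is_multiplicity Ssg m -> m = mm.
Proof.
case=> Sm m0 H; case: mult_mm => Smm mm0 H'.
have := H _ Smm mm0; have := H' _ Sm m0; lia.
Qed.

Lemma aperyE x : apery_nz Ssg x <-> [/\ Ssg x, 0 < x & ~~ ((mm <= x) && Ssg (x - mm))].
Proof.
split; first by case=> m [/mult_uniq ->].
by move=> h; exists mm; split=> //; exact: mult_mm.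
Qed.

Definition f (u : T) := mm + cc u.

Lemma S_mid s : mm < s < 2 * mm -> Ssg s = inA s.
Proof.
move=> h; rewrite /Ssg; case: (inA s); rewrite ?orbT //=.
apply/negbTE; rewrite !negb_or; apply/and3P; split; try apply/eqP; lia.
Qed.

Lemma S_low s : 0 < s < mm -> Ssg s = false.
Proof.
move=> h; rewrite /Ssg; case E: (inA s); first by have := inA_range E; lia.
rewrite /=; apply/negbTE; rewrite !negb_or; apply/and3P; split; try apply/eqP; lia.
Qed.

Lemma apery_f u : apery_nz Ssg (f u).
Proof.
apply/aperyE; have := eps_lt u; rewrite /f => hu; split.
- rewrite /Ssg; apply/or4P; apply: Or43; apply/orP; left.
  by apply/existsP; exists u.
- rewrite /cc /NN; lia.
- rewrite addKn S_low ?andbF //; rewrite /cc /mm /NN; lia.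
Qed.

Lemma edgeE u v : GS_edge Ssg (f u) (f v) <-> e u v.
Proof.
have hu := eps_lt u; have hv := eps_lt v.
have hs : Ssg (f u + f v) by apply: S_add; case/aperyE: (apery_f u); case/aperyE: (apery_f v).
have Hm : f u + f v - mm = mm + cc u + cc v by rewrite /f; lia.
split.
- case=> _ _ /aperyE [_ _]; rewrite Hm S_mid; last by rewrite /cc /mm /NN; lia.
  rewrite negb_and; case/orP; first by rewrite /f; lia.
  rewrite negb_or => /andP [_ /existsPn /(_ u) /existsPn /(_ v)].
  by rewrite eqxx andbT negbK.
- move=> euv; split; try exact: apery_f.
  apply/aperyE; split=> //; first by rewrite /f /cc /NN; lia.
  rewrite Hm S_mid; last by rewrite /cc /mm /NN; lia.
  rewrite negb_and; apply/orP; right; rewrite negb_or; apply/andP; split.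
  + apply/existsPn => w; apply/eqP; have := eps_lt w; rewrite /cc /mm /NN; lia.
  + apply/existsPn => x; apply/existsPn => y; rewrite negb_and negbK.
    apply/orP; case: eqP => [E|]; [left|by right].
    have E' : eps u + eps v = eps x + eps y by move: E; rewrite /cc; lia.
    case: (sidon E') => [[/val_inj/enum_rank_inj <- /val_inj/enum_rank_inj <-]|[/val_inj/enum_rank_inj <- /val_inj/enum_rank_inj <-]] //.
    by rewrite esym.
Qed.

Lemma vertexE (noiso : forall x : T, exists y : T, e x y) w :
  GS_vertex Ssg w <-> exists x, f x = w.
Proof.
split; last first.
  case=> x <-; have [y exy] := noiso x; exists (f y); exact/edgeE.
case=> z [/aperyE [Sw w0 Hw] /aperyE [Sz z0 Hz] /aperyE [_ _ Hwz]].
have [|mw] := S_ge Sw; first lia.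
have [|mz] := S_ge Sz; first lia.
have w1 : mm < w.
  rewrite ltn_neqAle mw andbT; apply/eqP => E; move: Hw; rewrite -E subnn leqnn /=.
  by [] || by rewrite /Ssg eqxx.
have z1 : mm < z.
  rewrite ltn_neqAle mz andbT; apply/eqP => E; move: Hz; rewrite -E subnn leqnn /=.
  by [] || by rewrite /Ssg eqxx.
have big : forall t, 2 * mm <= t -> Ssg t.
  by move=> t ht; rewrite /Ssg; apply/or4P; apply: Or44.
have w2 : w < 2 * mm.
  rewrite ltnNge; apply/negP => hw; move: Hwz; rewrite big; last lia.
  by rewrite andbT; lia.
have z2 : z < 2 * mm.
  rewrite ltnNge; apply/negP => hz; move: Hwz; rewrite big; last lia.
  by rewrite andbT; lia.
have zA : mm + NN <= z.
  by move: Sz; rewrite S_mid; [move/inA_range => /andP [] | lia].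
move: Sw; rewrite S_mid; last lia.
case/orP => [/existsP [x /eqP ->]|/existsP [x /existsP [y /andP [_ /eqP E]]]].
  by exists x.
exfalso; move: Hwz; rewrite big; first by rewrite andbT; lia.
move: E zA; rewrite /cc /mm; lia.
Qed.

End Constr.

Theorem theorem6p1 (T : finType) (e : rel T) :
  loopy_graph e ->
  exists Sq : nat -> (nat -> bool),
    (forall i j, i <> j -> exists n, Sq i n != Sq j n) /\
    (forall i, numerical_semigroup (Sq i) /\ iso_to_GS e (Sq i)).
Proof.
case=> esym noiso.
exists (fun i => @Ssg T e i); split.
  have key : forall i j, i < j -> @Ssg T e i (@mm T i) && ~~ @Ssg T e j (@mm T i).
    move=> i j ij; rewrite (@S_low T e j); last by rewrite /mm /NN; lia.
    by rewrite /Ssg eqxx orbT.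
  move=> i j /eqP; rewrite neq_ltn; case/orP => ij.
    have /andP [h1 h2] := key _ _ ij; exists (@mm T i).
    by rewrite h1; move/negbTE: h2 => ->.
  have /andP [h1 h2] := key _ _ ij; exists (@mm T j).
  by rewrite h1; move/negbTE: h2 => ->.
move=> i; split; first exact: numsg.
exists (@f T i); split.
- move=> u v; rewrite /f /cc => /addnI /addnI /eqP; rewrite /eps eqn_exp2l //.
  by move=> /eqP /val_inj /enum_rank_inj.
- exact: vertexE.
- by move=> x y; rewrite edgeE.
Qed.
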